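(* Let $r\ge1$ and let $F$ be a graph with chromatic number $\chi(F)=r+1$. Then for every real $p>1$, as $n\to\infty$, $$\mathrm{ex}^{(p)}_\lambda(n,F)=\lambda^{(p)}(T_r(n))+o\!\left(n^{2-2/p}\right)=\left(1-\frac1r+o(1)\right)n^{2-2/p}.$$
   Context: For a graph $G$ on vertex set $\{1,\dots,n\}$ and real $p\ge1$, the $p$-spectral radius is $\lambda^{(p)}(G)=\max\{2\sum_{\{i,j\}\in E(G)}x_ix_j:\ x\in\mathbb R^n,\ |x_1|^p+\dots+|x_n|^p=1\}$. $\mathrm{ex}^{(p)}_\lambda(n,F)$ is the maximum of $\lambda^{(p)}(G)$ over all $n$-vertex graphs $G$ containing no subgraph isomorphic to $F$. $T_r(n)$ is the Turán graph: the complete $r$-partite graph on $n$ vertices with part sizes as equal as possible. *)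

(* Defs.v *)
From HB Require Import structures.
From mathcomp Require Import all_boot all_order all_algebra.
From mathcomp Require Import all_classical all_reals all_analysis.
Set Implicit Arguments. Unset Strict Implicit. Unset Printing Implicit Defensive.
Import Order.TTheory GRing.Theory Num.Theory.
Import numFieldNormedType.Exports.
Local Open Scope classical_set_scope.
Local Open Scope ring_scope.

Record sgraph (V : finType) := SGraph {
  adj : rel V;
  adj_sym : symmetric adj;
  adj_irr : irreflexive adj }.

Definition colorable (V : finType) (G : sgraph V) (k : nat) : bool :=
  [exists c : {ffun V -> 'I_k}, [forall u, forall v, adj G u v ==> (c u != c v)]].

Lemma colorable_exists (V : finType) (G : sgraph V) : exists k, colorable G k.
Proof.
exists #|V|; apply/existsP; exists [ffun u => enum_rank u].
apply/forallP => u; apply/forallP => v; apply/implyP => huv; rewrite !ffunE.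
apply/negP => /eqP /enum_rank_inj euv.
by move: huv; rewrite euv (adj_irr G).
Qed.

Definition chromatic_number (V : finType) (G : sgraph V) : nat :=
  ex_minn (colorable_exists G).

Definition contains (V W : finType) (G : sgraph W) (F : sgraph V) : Prop :=
  exists f : V -> W, injective f /\ forall u v, adj F u v -> adj G (f u) (f v).

Definition p_spectral_radius (R : realType) (p : R) (n : nat) (G : sgraph 'I_n) : R :=
  sup [set v : R | exists x : 'I_n -> R,
         \sum_(i < n) `|x i| `^ p = 1 /\
         v = 2 * \sum_(i < n) \sum_(j < n | (i < j)%N && adj G i j) x i * x j].

Definition ex_lambda (R : realType) (p : R) (n : nat) (V : finType) (F : sgraph V) : R :=
  sup [set v : R | exists G : sgraph 'I_n, ~ contains G F /\ v = p_spectral_radius p G].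

(* Turán graph T_r(n): vertex i lies in part (i mod r); parts have sizes
   differing by at most one. *)
Definition turan_adj (r n : nat) : rel 'I_n := fun (i j : 'I_n) => (i %% r != j %% r)%N.

Lemma turan_sym (r m : nat) : symmetric (@turan_adj r m).
Proof. by move=> i j; rewrite /turan_adj eq_sym. Qed.

Lemma turan_irr (r m : nat) : irreflexive (@turan_adj r m).
Proof. by move=> i; rewrite /turan_adj eqxx. Qed.

Definition turan (r n : nat) : sgraph 'I_n := @SGraph _ (@turan_adj r n) (@turan_sym r n) (@turan_irr r n).

(* Main.v *)
Require Import Defs.
From HB Require Import structures.
From mathcomp Require Import all_boot all_order all_algebra.
From mathcomp Require Import all_classical all_reals all_analysis.
From mathcomp Require Import ring lra zify.
Import Order.TTheory GRing.Theory Num.Theory.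
Import numFieldNormedType.Exports.
Local Open Scope classical_set_scope.
Local Open Scope ring_scope.
Set Implicit Arguments. Unset Strict Implicit. Unset Printing Implicit Defensive.
Local Close Scope classical_set_scope.

Definition deg (T : finType) (e : rel T) (S : {set T}) (v : T) : nat :=
  (\sum_(w in S) (e v w : nat))%N.

Definition Dsum (T : finType) (e : rel T) (S : {set T}) : nat :=
  (\sum_(u in S) deg e S u)%N.

Definition Kp (T : finType) (e : rel T) (k t : nat) (S : {set T}) :=
  exists P : 'I_k -> {set T}, (forall i, P i \subset S /\ #|P i| = t) /\
    (forall i j, i != j -> forall x y, x \in P i -> y \in P j -> e x y).

Definition shr (T : finType) (A : {set T}) (t : nat) : {set T} :=
  [set x in take t (enum A)].

Lemma shr_sub (T : finType) (A : {set T}) t : shr A t \subset A.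
Proof. by apply/fintype.subsetP => x; rewrite inE => /mem_take; rewrite mem_enum. Qed.

Lemma shr_card (T : finType) (A : {set T}) t : (t <= #|A|)%N -> #|shr A t| = t.
Proof.
move=> h; rewrite /shr cardsE (card_uniqP (take_uniq _ (enum_uniq _))) size_take -cardE.
by case: ltngtP h.
Qed.

Lemma card_sum (T : finType) (A : {set T}) (P : pred T) :
  #|[set w in A | P w]| = (\sum_(w in A) (P w : nat))%N.
Proof.
rewrite -sum1_card big_mkcond [RHS]big_mkcond; apply: eq_bigr => w _.
by rewrite inE; case: (w \in A); case: (P w).
Qed.

Lemma deg_card (T : finType) (e : rel T) S v : deg e S v = #|[set w in S | e v w]|.
Proof. by rewrite card_sum. Qed.

Lemma deg_le (T : finType) (e : rel T) S v : (deg e S v <= #|S|)%N.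
Proof. by rewrite /deg -sum1_card; apply: leq_sum => w _; exact: leq_b1. Qed.

Lemma Dsum_le (T : finType) (e : rel T) S : (Dsum e S <= #|S| * #|S|)%N.
Proof.
rewrite /Dsum -sum_nat_const; apply: leq_sum => u _; exact: deg_le.
Qed.

Lemma Dsum_D1 (T : finType) (e : rel T) (S : {set T}) v : symmetric e -> irreflexive e -> v \in S ->
  Dsum e S = (Dsum e (S :\ v) + 2 * deg e S v)%N.
Proof.
move=> esym eirr vS.
have degD1 : forall u, deg e S u = ((e u v : nat) + deg e (S :\ v) u)%N.
  move=> u; rewrite /deg (bigD1 v) //=; congr (_ + _)%N.
  by apply: eq_bigl => w; rewrite in_setD1 andbC.
rewrite /Dsum (bigD1 v) //=.
have -> : (\sum_(u in S | u != v) deg e S u = \sum_(u in S :\ v) deg e S u)%N.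
  by apply: eq_bigl => w; rewrite in_setD1 andbC.
rewrite (eq_bigr (fun u => (e u v : nat) + deg e (S :\ v) u)%N); last by move=> u _; exact: degD1.
rewrite big_split /=.
have -> : (\sum_(u in S :\ v) (e u v : nat) = deg e S v)%N.
  by rewrite degD1 eirr add0n /deg; apply: eq_bigr => u _; rewrite esym.
lia.
Qed.

Lemma card_bigcup_le (T : finType) k (P : 'I_k -> {set T}) :
  (#|(\bigcup_(i < k) P i)%SET| <= \sum_(i < k) #|P i|)%N.
Proof.
apply: (big_ind2 (fun (A : {set T}) n => #|A| <= n)%N) => [|A a B b hA hB|i _ //].
  by rewrite cards0.
apply: leq_trans (leq_add hA hB); by case: (leq_card_setU A B).
Qed.

Section CC.
Variable R : realType.

Definition cc (m : nat) : R := (m%:R - 1) / m%:R.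

Lemma ccS m : cc m.+1 = 1 - (m.+1%:R)^-1.
Proof. by rewrite /cc mulrBl divff ?pnatr_eq0 // mul1r. Qed.

Lemma cc_ge0 m : 0 <= cc m.
Proof.
case: m => [|m]; first by rewrite /cc invr0 mulr0.
by rewrite /cc divr_ge0 // subr_ge0 ler1n.
Qed.

Lemma cc_le1 m : cc m <= 1.
Proof.
case: m => [|m]; first by rewrite /cc invr0 mulr0.
by rewrite ccS gerBl invr_ge0.
Qed.

Lemma cc_le m : cc m <= cc m.+1.
Proof.
case: m => [|m]; first by rewrite ccS /cc invr0 mulr0 mulr1n invr1 subrr.
rewrite !ccS lerD2l lerN2 lef_pV2 ?posrE ?ltr0n // ler_nat. by [].
Qed.

Lemma ccSM m : cc m.+1 * m.+1%:R = m%:R.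
Proof. by rewrite /cc divfK ?pnatr_eq0 // -natr1 addrK. Qed.

End CC.

Section MDsec.
Variable R : realType.

Lemma MD (m : nat) : forall (eps : R), 0 < eps -> forall t : nat, exists n0 : nat,
  forall (T : finType) (e : rel T), symmetric e -> irreflexive e -> forall S : {set T},
  (n0 <= #|S|)%N -> (forall v, v \in S -> (cc R m + eps) * #|S|%:R <= (deg e S v)%:R) ->
  Kp e m.+1 t S.
Proof.
elim: m => [|m IH] eps eps0 t.
  exists t => T e _ _ S hS _.
  exists (fun _ => shr S t); split => [i|i j]; first by split; [exact: shr_sub | exact: shr_card].
  by rewrite (ord1 i) (ord1 j) eqxx.
pose q := Num.Def.archi_bound (2 * t%:R / eps).
pose T0 := q.+1.
have hq : 2 * t%:R / eps < T0%:R.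
  apply: lt_le_trans (archi_boundP _) _; first by rewrite divr_ge0 // ?mulr_ge0 // ltW.
  by rewrite ler_nat.
have [n1 Hn1] := IH eps eps0 T0.
pose B := (t * 2 ^ (m.+1 * T0))%N.
pose N1 := Num.Def.archi_bound (2 * B%:R / eps).
have hN1 : 2 * B%:R / eps < N1%:R.
  by apply: archi_boundP; rewrite divr_ge0 // ?mulr_ge0 // ltW.
exists (maxn n1 N1) => T e esym eirr S.
rewrite geq_max => /andP [hn1 hN1'] hdeg.
have hdeg' : forall v, v \in S -> (cc R m + eps) * #|S|%:R <= (deg e S v)%:R.
  move=> v vS; apply: le_trans (hdeg v vS); rewrite ler_wpM2r // lerD2r; exact: cc_le.
have [P [PS Pe]] := Hn1 T e esym eirr S hn1 hdeg'.
set n := #|S|.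
pose U := (\bigcup_(i < m.+1) P i)%SET.
pose Good := [set w in S | [forall i, (t <= deg e (P i) w)%N]].
pose f := fun w => [set u in U | e w u].
have dc : (\sum_(w in S) \sum_(i < m.+1) deg e (P i) w = \sum_(i < m.+1) \sum_(u in P i) deg e S u)%N.
  rewrite exchange_big /=; apply: eq_bigr => i _.
  rewrite /deg exchange_big /=; apply: eq_bigr => u _; apply: eq_bigr => w _; by rewrite esym.
have cnt_low : (m.+1 * T0)%:R * ((cc R m.+1 + eps) * n%:R) <= (\sum_(w in S) \sum_(i < m.+1) deg e (P i) w)%:R.
  rewrite dc natr_sum.
  have -> : (m.+1 * T0)%:R * ((cc R m.+1 + eps) * n%:R) = \sum_(i < m.+1) \sum_(u in P i) ((cc R m.+1 + eps) * n%:R).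
    rewrite (eq_bigr (fun=> ((cc R m.+1 + eps) * n%:R) *+ T0)); last first.
      by move=> i _; rewrite sumr_const; case: (PS i) => _ ->.
    rewrite sumr_const card_ord -mulrnA mulr_natl; congr (_ *+ _); lia.
  apply: ler_sum => i _; rewrite natr_sum; apply: ler_sum => u uP.
  apply: hdeg; case: (PS i) => /fintype.subsetP h _; exact: h.
have cnt_up : (\sum_(w in S) \sum_(i < m.+1) deg e (P i) w <= #|Good| * (m.+1 * T0) + n * (m * T0 + t))%N.
  have step : forall w, w \in S -> (\sum_(i < m.+1) deg e (P i) w <= (w \in Good) * (m.+1 * T0) + (m * T0 + t))%N.
    move=> w wS.
    have degP : forall i, (deg e (P i) w <= T0)%N.
      by move=> i; case: (PS i) => _ <-; exact: deg_le.
    case: (boolP (w \in Good)) => wG.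
      rewrite mul1n; apply: leq_trans _ (leq_addr _ _).
      apply: (@leq_trans (\sum_(i < m.+1) T0)); first by apply: leq_sum => i _; exact: degP.
      by rewrite sum_nat_const card_ord.
    rewrite mul0n add0n.
    move: wG; rewrite inE wS /= negb_forall => /existsP [i0 hi0].
    rewrite -ltnNge in hi0.
    rewrite (bigD1 i0) //= addnC.
    apply: leq_add; last exact: ltnW.
    apply: (@leq_trans (\sum_(i < m.+1 | i != i0) T0)); first by apply: leq_sum => i _; exact: degP.
    by rewrite sum_nat_const cardC1 card_ord.
  apply: (@leq_trans (\sum_(w in S) ((w \in Good) * (m.+1 * T0) + (m * T0 + t)))%N).
    by apply: leq_sum => w wS; exact: step.
  rewrite big_split /= -big_distrl /= sum_nat_const.
  apply: leq_add => //.
  rewrite leq_mul2r; apply/orP; right.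
  rewrite -(@card_sum _ S (fun w => w \in Good)).
  by apply: subset_leq_card; apply/fintype.subsetP => w; rewrite inE => /andP [].
have Gbig : (B < #|Good|)%N.
  rewrite -(ltr_nat R).
  move: cnt_up; rewrite -(ler_nat R) => cnt_up.
  have cnt := le_trans cnt_low cnt_up.
  rewrite !natrD !natrM in cnt.
  set g := #|Good|%:R in cnt *.
  set a := T0%:R in cnt hq *.
  set M1 := m.+1%:R in cnt *.
  set nn := n%:R in cnt hN1' *.
  have e1 : M1 * a * ((cc R m.+1 + eps) * nn) = m%:R * a * nn + (M1 * a) * (eps * nn).
    by rewrite -(ccSM R m) /M1; ring.
  have a0 : 0 < a by rewrite ltr0n.
  have M11 : 1 <= M1 by rewrite ler1n.
  have nn0 : 0 <= nn by rewrite ler0n.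
  have ht : 2 * t%:R < a * eps by rewrite -ltr_pdivrMr.
  have hB : 2 * B%:R < eps * nn.
    have h : 2 * B%:R / eps < nn by apply: (lt_le_trans hN1); rewrite /nn ler_nat.
    by rewrite [eps * nn]mulrC -ltr_pdivrMr.
  have h2 : t%:R * nn <= (M1 * a) * (eps * nn) / 2.
    have : 2 * t%:R * nn <= a * eps * nn by rewrite ler_wpM2r // ltW.
    have : a * eps * nn <= M1 * a * (eps * nn).
      have -> : M1 * a * (eps * nn) = M1 * (a * eps * nn) by ring.
      by rewrite ler_peMl // mulr_ge0 // mulr_ge0 // ltW.
    lra.
  have h3 : (M1 * a) * (eps * nn) / 2 <= g * (M1 * a) by lra.
  have h4 : eps * nn / 2 <= g.
    have X0 : 0 < M1 * a by rewrite mulr_gt0 // (lt_le_trans _ M11).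
    rewrite -(ler_pM2r X0); lra.
  lra.
have [Z ZU HZ] : exists2 Z, Z \in powerset U & (t <= #|[set w in Good | f w == Z]|)%N.
  have : [exists Z in powerset U, (t <= #|[set w in Good | f w == Z]|)%N].
    apply: contraT => /exists_inPn H.
    have : (#|Good| <= B)%N.
      rewrite -sum1_card (partition_big f (fun Z => Z \in powerset U)); last first.
        by move=> w _; rewrite powersetE; apply/fintype.subsetP => u; rewrite inE => /andP [].
      apply: (@leq_trans (\sum_(Z in powerset U) t)).
        apply: leq_sum => Z ZU.
        have := H Z ZU; rewrite -ltnNge card_sum => /ltnW.
        apply: leq_trans; rewrite big_mkcondr /=; apply: leq_sum => w _.
        by case: (f w == Z).
      rewrite sum_nat_const card_powerset /B mulnC leq_mul2l; apply/orP; right.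
      rewrite leq_exp2l //; apply: leq_trans (card_bigcup_le P) _.
      rewrite (eq_bigr (fun=> T0)); last by move=> i _; case: (PS i).
      by rewrite sum_nat_const card_ord.
    by rewrite leqNgt Gbig.
  by case/exists_inP => Z ZU HZ; exists Z.
pose W := [set w in Good | f w == Z].
have WG : forall w, w \in W -> (w \in Good) && (f w == Z) by move=> w; rewrite inE.
have ZP : forall i, (t <= #|Z :&: P i|)%N.
  move=> i; have [->|tpos] := posnP t; first by [].
  have /card_gt0P [w0 w0W] : (0 < #|W|)%N := leq_trans tpos HZ.
  have /andP [w0G /eqP fw0] := WG w0 w0W.
  move: w0G; rewrite inE => /andP [_ /forallP /(_ i)] hi.
  apply: leq_trans hi _; rewrite deg_card; apply: subset_leq_card.
  apply/fintype.subsetP => u; rewrite !inE => /andP [uP euv].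
  rewrite uP andbT -fw0 inE euv andbT.
  by apply/bigcupP; exists i.
pose P' := fun i : 'I_m.+2 => if unlift ord_max i is Some j then shr (Z :&: P j) t else shr W t.
exists P'; split.
  move=> i; rewrite /P'; case: unliftP => [j _|_]; split.
  - apply: fintype.subset_trans (shr_sub _ _) _; apply: fintype.subset_trans (subsetIr _ _) _; by case: (PS j).
  - exact: shr_card.
  - apply: fintype.subset_trans (shr_sub _ _) _; apply/fintype.subsetP => w /WG /andP [].
    by rewrite inE => /andP [].
  - exact: shr_card.
move=> i j; rewrite /P'.
case: (unliftP ord_max i) => [a ->|->]; case: (unliftP ord_max j) => [b ->|->] //.
- rewrite (inj_eq (@lift_inj _ ord_max)) => ab x y.
  move=> /(fintype.subsetP (shr_sub _ _)); rewrite inE => /andP [_ xP].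
  move=> /(fintype.subsetP (shr_sub _ _)); rewrite inE => /andP [_ yP].
  exact: Pe ab x y xP yP.
- move=> _ x y.
  move=> /(fintype.subsetP (shr_sub _ _)); rewrite inE => /andP [xZ _].
  move=> /(fintype.subsetP (shr_sub _ _)) /WG /andP [_ /eqP fy].
  move: xZ; rewrite -fy inE => /andP [_ h]; by rewrite esym.
- move=> _ x y.
  move=> /(fintype.subsetP (shr_sub _ _)) /WG /andP [_ /eqP fx].
  move=> /(fintype.subsetP (shr_sub _ _)); rewrite inE => /andP [yZ _].
  by move: yZ; rewrite -fx inE => /andP [].
- by rewrite eqxx.
Qed.

End MDsec.

Section ESsec.
Variable R : realType.

Lemma ES (r : nat) (eps : R) (t : nat) : 0 < eps -> exists M0 : nat,
  forall (T : finType) (e : rel T), symmetric e -> irreflexive e -> forall A : {set T},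
  (M0 <= #|A|)%N -> (cc R r + eps) * (#|A|%:R ^+ 2) <= (Dsum e A)%:R -> Kp e r.+1 t A.
Proof.
move=> eps0.
have eps4 : 0 < eps / 4 by rewrite divr_gt0.
have [n0 Hn0] := MD r eps4 t.
pose N2 := Num.Def.archi_bound ((2 + eps) / eps).
have hN2 : (2 + eps) / eps < N2%:R.
  by apply: archi_boundP; rewrite divr_ge0 // ?addr_ge0 // ltW.
pose X := maxn n0 N2.
pose q := (Num.Def.archi_bound (2 / eps)).+1.
have hq : 2 / eps < q%:R.
  apply: lt_le_trans (archi_boundP _) _; first by rewrite divr_ge0 // ltW.
  by rewrite ler_nat.
exists (X * q)%N => T e esym eirr A hA hD.
pose c := cc R r + eps / 2.
pose phi := fun S : {set T} => (Dsum e S)%:R - c * #|S|%:R ^+ 2.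
case: (@arg_maxP _ _ _ A (fun S : {set T} => S \subset A) phi (fintype.subxx A)) => S SA Smax.
have Smax' : forall j : {set T}, j \subset A -> phi j <= phi S := Smax.
have phiA : eps / 2 * #|A|%:R ^+ 2 <= phi A by rewrite /phi /c; lra.
have phiS : phi A <= phi S := Smax' A (fintype.subxx A).
have DS : (Dsum e S)%:R <= #|S|%:R ^+ 2 :> R by rewrite expr2 -natrM ler_nat Dsum_le.
have c0 : 0 <= c by rewrite /c addr_ge0 ?cc_ge0 // divr_ge0 // ltW.
have Sbig : eps / 2 * #|A|%:R ^+ 2 <= #|S|%:R ^+ 2.
  have : 0 <= c * #|S|%:R ^+ 2 :> R by rewrite mulr_ge0 // exprn_ge0.
  rewrite /phi in phiS phiA; lra.
have XS : (X <= #|S|)%N.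
  rewrite -(ler_nat R) -ler_sqr ?nnegrE ?ler0n //.
  apply: le_trans Sbig.
  have q1 : 1 <= q%:R :> R by rewrite ler1n.
  have eq2 : 2 < eps * q%:R by rewrite mulrC -ltr_pdivrMr.
  have h : 1 <= eps / 2 * q%:R ^+ 2 by rewrite expr2; nra.
  apply: (@le_trans _ _ (eps / 2 * (X * q)%:R ^+ 2)).
    by rewrite natrM exprMn mulrCA ler_peMr // exprn_ge0.
  apply: ler_wpM2l; first by rewrite divr_ge0 // ltW.
  by apply: lerXn2r; rewrite ?nnegrE ?ler0n // ler_nat.
have hcc : cc R r <= 1 by exact: cc_le1.
have Hmd : forall v, v \in S -> (cc R r + eps / 4) * #|S|%:R <= (deg e S v)%:R.
  move=> v vS.
  have h1 := Smax' (S :\ v) (fintype.subset_trans (subD1set S v) SA).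
  have hS : (N2 <= #|S|)%N by apply: leq_trans XS; exact: leq_maxr.
  have hbig : 2 + eps < eps * #|S|%:R.
    rewrite mulrC -ltr_pdivrMr //; apply: lt_le_trans hN2 _; by rewrite ler_nat.
  move: h1 hbig; rewrite /phi (Dsum_D1 esym eirr vS) (cardsD1 v S) vS.
  rewrite add1n -natr1 !natrD.
  set s := #|S :\ v|%:R; set d := (deg e S v)%:R; set D' := (Dsum e (S :\ v))%:R.
  rewrite /c => h1 hbig.
  rewrite addrC; nra.
have [P [PS Pe]] := Hn0 T e esym eirr S (leq_trans (leq_maxl _ _) XS) Hmd.
exists P; split => // i; case: (PS i) => h1 h2; split => //.
exact: fintype.subset_trans h1 SA.
Qed.

End ESsec.

Lemma chi_col (V : finType) (F : sgraph V) k : chromatic_number F = k -> colorable F k.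
Proof. by rewrite /chromatic_number; case: ex_minnP => m Hm _ <-. Qed.

Lemma chi_min (V : finType) (F : sgraph V) k : colorable F k -> (chromatic_number F <= k)%N.
Proof. by rewrite /chromatic_number; case: ex_minnP => m _ Hmin /Hmin. Qed.

Lemma Kp_contains (V W : finType) (F : sgraph V) (G : sgraph W) k (S : {set W}) :
  colorable F k -> Kp (adj G) k #|V| S -> contains G F.
Proof.
move=> /existsP [c /forallP Hc] [P [PS Pe]].
have cP : forall v, #|P (c v)| = #|V| by move=> v; case: (PS (c v)).
case: (posnP #|V|) => [V0|Vpos].
  have f0 : V -> W.
    by move=> v; exfalso; move: (card0_eq V0 v); rewrite !inE.
  exists f0; split.
    by move=> u; exfalso; move: (card0_eq V0 u); rewrite !inE.
  by move=> u; exfalso; move: (card0_eq V0 u); rewrite !inE.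
have /card_gt0P [v0 _] := Vpos.
have /card_gt0P [w0 _] : (0 < #|P (c v0)|)%N by rewrite cP.
pose f := fun v => nth w0 (enum (P (c v))) (enum_rank v).
have hsize : forall v u : V, (enum_rank u < size (enum (P (c v))))%N.
  by move=> v u; rewrite -cardE cP; exact: ltn_ord.
have fP : forall v : V, f v \in P (c v).
  by move=> v; rewrite -mem_enum; apply: mem_nth.
exists f; split.
  move=> u v fuv.
  have cuv : c u = c v.
    apply/eqP; apply: contraT => cne.
    by have := Pe _ _ cne (f u) (f v) (fP u) (fP v); rewrite fuv (adj_irr G).
  move: fuv; rewrite /f cuv => /eqP; rewrite nth_uniq ?enum_uniq ?hsize //.
  by move=> /eqP /ord_inj /enum_rank_inj.
move=> u v huv; apply: Pe; last 2 first.
- exact: fP.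
- exact: fP.
by have := Hc u => /forallP /(_ v) /implyP /(_ huv).
Qed.

Lemma turan_free (V : finType) (F : sgraph V) r n : (0 < r)%N ->
  chromatic_number F = r.+1 -> ~ contains (turan r n) F.
Proof.
move=> r0 hchi [f [finj fE]].
have col : colorable F r.
  apply/existsP; exists [ffun v => Ordinal (ltn_pmod (f v) r0)].
  apply/forallP => u; apply/forallP => v; apply/implyP => huv.
  by rewrite !ffunE -(inj_eq val_inj) /=; have := fE u v huv.
by have := chi_min col; rewrite hchi ltnn.
Qed.

Section Blowup.
Variable R : realType.

Lemma sum_narrow K a c : (a <= K)%N -> (\sum_(s < K | (s < a)%N) c = a * c)%N.
Proof. by move=> h; rewrite (big_ord_narrow h) sum_nat_const card_ord. Qed.

Lemma blowup_bound (V : finType) (F : sgraph V) (r : nat) (eps : R) :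
  colorable F r.+1 -> 0 < eps -> forall K : nat, (0 < K)%N -> exists M0 : nat,
  forall n (G : sgraph 'I_n), ~ contains G F -> forall k : 'I_n -> nat, (forall i, (k i < K)%N) ->
  ((\sum_i \sum_(j | adj G i j) k i * k j)%N)%:R
     <= (cc R r + eps) * ((\sum_i k i)%N)%:R ^+ 2 + M0%:R ^+ 2.
Proof.
move=> col eps0 K K0.
have [M0 HM0] := ES r (K * #|V|) eps0.
exists M0 => n G nc k kK.
pose TT := ('I_n * 'I_K)%type.
pose e := fun x y : TT => adj G x.1 y.1.
have esym : symmetric e by move=> x y; rewrite /e (adj_sym G).
have eirr : irreflexive e by move=> x; rewrite /e (adj_irr G).
pose A := [set x : TT | (x.2 < k x.1)%N].
have sumA : forall Fx : TT -> nat,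
    (\sum_(x in A) Fx x = \sum_i \sum_(s < K | (s < k i)%N) Fx (i, s))%N.
  move=> Fx; rewrite big_mkcond /=.
  rewrite (eq_bigr (fun i => \sum_(s < K) if (s < k i)%N then Fx (i, s) else 0)%N); last first.
    by move=> i _; rewrite big_mkcond.
  rewrite pair_big /=; apply: eq_bigr => [[i s]] _ /=; by rewrite /A inE.
have cardA : #|A| = (\sum_i k i)%N.
  rewrite -sum1_card sumA; apply: eq_bigr => i _; rewrite sum_narrow; last exact: ltnW.
  by rewrite muln1.
have DA : Dsum e A = (\sum_i \sum_(j | adj G i j) k i * k j)%N.
  rewrite /Dsum sumA; apply: eq_bigr => i _.
  have hdeg : forall s, deg e A (i, s) = (\sum_(j | adj G i j) k j)%N.
    move=> s; rewrite /deg sumA; rewrite [RHS]big_mkcond; apply: eq_bigr => j _ /=.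
    rewrite /e /=; case: (adj G i j); last by rewrite big1.
    by rewrite sum_narrow ?muln1 // ltnW.
  rewrite [LHS](eq_bigr (fun=> (\sum_(j | adj G i j) k j)%N)); last by move=> s _; exact: hdeg.
  by rewrite sum_narrow ?big_distrr // ltnW.
rewrite -DA -cardA.
have sq0 : 0 <= M0%:R ^+ 2 :> R by rewrite exprn_ge0.
have hc0 : 0 <= (cc R r + eps) * #|A|%:R ^+ 2.
  by rewrite mulr_ge0 ?exprn_ge0 // addr_ge0 ?cc_ge0 // ltW.
case: (ltnP #|A| M0) => hM.
  suff h : (Dsum e A)%:R <= M0%:R ^+ 2 :> R by lra.
  apply: (@le_trans _ _ (#|A|%:R ^+ 2)); first by rewrite expr2 -natrM ler_nat Dsum_le.
  by apply: lerXn2r; rewrite ?nnegrE ?ler0n // ler_nat ltnW.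
case: (lerP ((cc R r + eps) * #|A|%:R ^+ 2) (Dsum e A)%:R) => hD; last first.
  lra.
exfalso; apply: nc.
have [P [PS Pe]] := HM0 TT e esym eirr A hM hD.
pose img := fun i => [set x.1 | x in P i].
have imgc : forall i, (#|V| <= #|img i|)%N.
  move=> i; rewrite -(leq_pmul2r K0).
  have : P i \subset finset.setX (img i) [set: 'I_K].
    apply/fintype.subsetP => [[a s]] xP; rewrite !inE andbT.
    by apply/imsetP; exists (a, s).
  move/subset_leq_card; rewrite cardsX cardsT card_ord.
  by case: (PS i) => _ ->; rewrite mulnC.
apply: (@Kp_contains V _ F G r.+1 [set: 'I_n] col).
exists (fun i => shr (img i) #|V|); split.
  by move=> i; split; [exact: finset.subsetT | exact: shr_card].
move=> i j ij a b /(fintype.subsetP (shr_sub _ _)) /imsetP [x xP ->].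
move=> /(fintype.subsetP (shr_sub _ _)) /imsetP [y yP ->].
exact: Pe ij x y xP yP.
Qed.

End Blowup.

Section Analytic2.
Variable R : realType.

Lemma young1 (p z : R) : 1 < p -> 0 <= z -> z <= z `^ p / p + (1 - p^-1).
Proof.
move=> p1 z0; have p0 : 0 < p by apply: lt_trans p1.
have pm1 : 0 < p - 1 by rewrite subr_gt0.
pose q := p / (p - 1).
have q0 : 0 < q by rewrite divr_gt0.
have hpq : p^-1 + q^-1 = 1.
  rewrite /q invf_div; field.
  by rewrite gt_eqF.
have := conjugate_powR z0 ler01 p0 q0 hpq.
rewrite mulr1 powR1 /=.
have -> : 1 / q = 1 - p^-1.
  rewrite /q; field; rewrite ?gt_eqF //.
by [].
Qed.

Lemma Core (V : finType) (F : sgraph V) (r : nat) (p : R) : colorable F r.+1 -> 1 < p ->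
  forall eps : R, 0 < eps -> eps <= 1 -> exists N : nat, forall n (G : sgraph 'I_n),
  (N <= n)%N -> ~ contains G F ->
  forall z : 'I_n -> R, (forall i, 0 <= z i) -> \sum_i z i `^ p <= n%:R ->
  \sum_i \sum_(j | adj G i j) z i * z j <= (cc R r + eps) * n%:R ^+ 2.
Proof.
move=> col p1 eps eps0 eps1.
have p0 : 0 < p by apply: lt_trans p1.
have pm1 : 0 < p - 1 by rewrite subr_gt0.
pose eta := eps / 8.
have eta0 : 0 < eta by rewrite divr_gt0.
pose C := (8 / eps) `^ (p - 1)^-1.
have C0 : 0 <= C by exact: powR_ge0.
have CP : C `^ (p - 1) = 8 / eps.
  by rewrite /C -powRrM mulVf ?gt_eqF // powRr1 // divr_ge0 // ltW.
pose K := (Num.Def.truncn (C / eta)).+1.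
have eps4 : 0 < eps / 4 by rewrite divr_gt0.
have [M0 HM0] := blowup_bound col eps4 (ltn0Sn (Num.Def.truncn (C / eta))).
exists M0 => n G hn nc z z0 zp.
pose k := fun i => if z i <= C then Num.Def.truncn (z i / eta) else 0%N.
have kK : forall i, (k i < K)%N.
  move=> i; rewrite /k; case: ifP => // hz.
  by rewrite ltnS; apply: le_truncn; rewrite ler_pM2r ?invr_gt0.
pose z' := fun i => eta * (k i)%:R.
have z'0 : forall i, 0 <= z' i by move=> i; rewrite mulr_ge0 // ltW.
have z'z : forall i, z' i <= z i.
  move=> i; rewrite /z' /k; case: ifP => _; last by rewrite mulr0.
  have h : (Num.Def.truncn (z i / eta))%:R <= z i / eta by rewrite truncn_le divr_ge0 // ltW.
  by rewrite ler_pdivlMr // in h; rewrite mulrC.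
have dB : forall i, z i - z' i <= eta + eps / 8 * z i `^ p.
  move=> i; rewrite /z' /k; case: ifP => hz.
    have h := truncnS_gt (z i / eta).
    rewrite -natr1 ltr_pdivrMr // in h.
    have : 0 <= eps / 8 * z i `^ p by rewrite mulr_ge0 ?powR_ge0 // divr_ge0 // ltW.
    lra.
  rewrite mulr0 subr0.
  have zC : C <= z i by rewrite ltW // ltNge hz.
  have h : 8 / eps <= z i `^ (p - 1).
    by rewrite -CP; apply: ge0_ler_powR; rewrite ?nnegrE // ltW.
  rewrite -(mulr_powRB1 (z0 i) p0).
  have h2 : z i * (8 / eps) <= z i * z i `^ (p - 1) := ler_wpM2l (z0 i) h.
  have h3 : z i = eps / 8 * (z i * (8 / eps)) by field; rewrite gt_eqF.
  have h4 := ler_wpM2l (ltW eta0) h2.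
  rewrite /eta in h4; lra.
have sz : \sum_i z i <= n%:R.
  apply: (@le_trans _ _ (\sum_i (z i `^ p / p + (1 - p^-1)))).
    by apply: ler_sum => i _; exact: young1.
  rewrite big_split /= -mulr_suml sumr_const card_ord -mulr_natl.
  have : (\sum_i z i `^ p) / p <= n%:R / p by rewrite ler_pM2r ?invr_gt0.
  lra.
have sd : \sum_i (z i - z' i) <= eps / 4 * n%:R.
  apply: (@le_trans _ _ (\sum_i (eta + eps / 8 * z i `^ p))).
    by apply: ler_sum => i _; exact: dB.
  rewrite big_split /= sumr_const card_ord -mulr_sumr.
  have -> : eta *+ n = eta * n%:R by rewrite mulr_natr.
  have : eps / 8 * \sum_i z i `^ p <= eps / 8 * n%:R by rewrite ler_wpM2l // divr_ge0 // ltW.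
  rewrite /eta; lra.
have sd0 : 0 <= \sum_i (z i - z' i) by apply: sumr_ge0 => i _; rewrite subr_ge0.
have sz0 : 0 <= \sum_i z i by apply: sumr_ge0.
have h1 : \sum_i \sum_(j | adj G i j) z i * z j <=
   \sum_i \sum_(j | adj G i j) (z' i * z' j + ((z i - z' i) * z j + z i * (z j - z' j))).
  apply: ler_sum => i _; apply: ler_sum => j _.
  have := z'z i; have := z'z j; have := z'0 i; have := z'0 j; nra.
have eqS : \sum_i \sum_(j | adj G i j) (z' i * z' j + ((z i - z' i) * z j + z i * (z j - z' j)))
   = \sum_i \sum_(j | adj G i j) z' i * z' j +
     \sum_i \sum_(j | adj G i j) ((z i - z' i) * z j + z i * (z j - z' j)).
  by rewrite -big_split; apply: eq_bigr => i _; rewrite big_split.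
rewrite eqS in h1.
have h3 : \sum_i \sum_(j | adj G i j) ((z i - z' i) * z j + z i * (z j - z' j))
    <= 2 * (\sum_i (z i - z' i)) * (\sum_i z i).
  apply: (@le_trans _ _ (\sum_i \sum_j ((z i - z' i) * z j + z i * (z j - z' j)))).
    apply: ler_sum => i _; rewrite [leRHS](bigID (adj G i)) /= lerDl; apply: sumr_ge0 => j _.
    by rewrite addr_ge0 // mulr_ge0 // subr_ge0.
  rewrite (eq_bigr (fun i => (z i - z' i) * \sum_j z j + z i * \sum_j (z j - z' j))); last first.
    by move=> i _; rewrite big_split /= -!mulr_sumr.
  rewrite big_split /= -!mulr_suml; lra.
have h4 : \sum_i \sum_(j | adj G i j) z' i * z' j =
    eta ^+ 2 * ((\sum_i \sum_(j | adj G i j) k i * k j)%N)%:R.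
  rewrite natr_sum mulr_sumr; apply: eq_bigr => i _; rewrite natr_sum mulr_sumr.
  by apply: eq_bigr => j _; rewrite natrM /z'; ring.
have h5 : eta * ((\sum_i k i)%N)%:R <= n%:R.
  have -> : eta * ((\sum_i k i)%N)%:R = \sum_i z' i by rewrite natr_sum mulr_sumr.
  by apply: le_trans sz; apply: ler_sum => i _; exact: z'z.
have h6 := HM0 n G nc k kK.
set X := ((\sum_i \sum_(j | adj G i j) k i * k j)%N)%:R in h4 h6.
set Ks := ((\sum_i k i)%N)%:R in h5 h6.
have Ks0 : 0 <= Ks by rewrite ler0n.
have cc0 : 0 <= cc R r + eps / 4 by rewrite addr_ge0 ?cc_ge0 // ltW.
have h7 : eta ^+ 2 * X <= (cc R r + eps / 4) * n%:R ^+ 2 + eta ^+ 2 * M0%:R ^+ 2.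
  have e2 : 0 <= eta ^+ 2 by rewrite exprn_ge0 // ltW.
  apply: (@le_trans _ _ (eta ^+ 2 * ((cc R r + eps / 4) * Ks ^+ 2 + M0%:R ^+ 2))).
    exact: ler_wpM2l.
  rewrite mulrDr lerD2r.
  have : (eta * Ks) ^+ 2 <= n%:R ^+ 2.
    by apply: lerXn2r; rewrite ?nnegrE ?mulr_ge0 ?ler0n // ltW.
  rewrite exprMn => hh.
  have := ler_wpM2l cc0 hh; lra.
have h8 : eta ^+ 2 * M0%:R ^+ 2 <= eps / 4 * n%:R ^+ 2.
  have hM : M0%:R ^+ 2 <= n%:R ^+ 2 :> R.
    by apply: lerXn2r; rewrite ?nnegrE ?ler0n // ler_nat.
  have e2 : eta ^+ 2 <= eps / 4.
    rewrite /eta expr2; nra.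
  apply: ler_pM; rewrite ?exprn_ge0 // ltW //.
have h9 : 2 * (\sum_i (z i - z' i)) * (\sum_i z i) <= eps / 2 * n%:R ^+ 2.
  have : (\sum_i (z i - z' i)) * (\sum_i z i) <= eps / 4 * n%:R * n%:R.
    apply: ler_pM => //.
  rewrite expr2; lra.
rewrite h4 in h1.
lra.
Qed.

End Analytic2.

Section Main.
Variable R : realType.

Lemma sup_le_ub0 (E : set R) (b : R) : 0 <= b -> (forall v, E v -> v <= b) -> sup E <= b.
Proof.
move=> b0 H.
have [[v Ev]|nE] := pselect (exists v, E v).
  by apply: ge_sup; [exists v | move=> x Ex; exact: H].
have -> : E = set0.
  by apply/seteqP; split => x // Ex; exfalso; apply: nE; exists x.
by rewrite sup0.
Qed.

Lemma sym_sum n (G : sgraph 'I_n) (w : 'I_n -> 'I_n -> R) : (forall i j, w i j = w j i) ->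
  \sum_i \sum_(j | adj G i j) w i j = 2 * \sum_(i < n) \sum_(j < n | (i < j)%N && adj G i j) w i j.
Proof.
move=> hw.
have hsplit : forall i, \sum_(j | adj G i j) w i j =
    \sum_(j < n | (i < j)%N && adj G i j) w i j + \sum_(j < n | (j < i)%N && adj G i j) w i j.
  move=> i; rewrite (bigID (fun j : 'I_n => (i < j)%N)) /=; congr (_ + _).
    by apply: eq_bigl => j; rewrite andbC.
  apply: eq_bigl => j; case: (ltngtP i j) => [h|h|/ord_inj ->]; rewrite ?andbF ?andbT //=.
  by rewrite (adj_irr G).
have hB : \sum_(i < n) \sum_(j < n | (j < i)%N && adj G i j) w i j =
          \sum_(i < n) \sum_(j < n | (i < j)%N && adj G i j) w i j.
  rewrite (eq_bigr (fun i : 'I_n => \sum_(j < n) (if (j < i)%N && adj G i j then w i j else 0))); last first.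
    by move=> i _; rewrite big_mkcond.
  rewrite exchange_big /=; apply: eq_bigr => i _; rewrite [RHS]big_mkcond; apply: eq_bigr => j _.
  by rewrite (adj_sym G j i) (hw j i).
rewrite (eq_bigr _ (fun i _ => hsplit i)) big_split /= hB.
lra.
Qed.

Lemma val_le n (G : sgraph 'I_n) (x : 'I_n -> R) :
  2 * \sum_(i < n) \sum_(j < n | (i < j)%N && adj G i j) x i * x j <=
  \sum_i \sum_(j | adj G i j) `|x i| * `|x j|.
Proof.
rewrite (@sym_sum n G (fun i j => `|x i| * `|x j|)); last by move=> i j; rewrite mulrC.
rewrite ler_pM2l //; apply: ler_sum => i _; apply: ler_sum => j _.
by rewrite -normrM ler_norm.
Qed.

Lemma abs_le1 n (p : R) (x : 'I_n -> R) (i : 'I_n) : 1 <= p ->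
  \sum_(i < n) `|x i| `^ p = 1 -> `|x i| <= 1.
Proof.
move=> p1 hx; rewrite leNgt; apply/negP => hi.
have h1 : `|x i| <= `|x i| `^ p by apply: le1r_powR => //; exact: ltW.
have h2 : `|x i| `^ p <= 1.
  rewrite -hx (bigD1 i) //= lerDl; apply: sumr_ge0 => j _; exact: powR_ge0.
lra.
Qed.

Lemma val_bound n (p : R) (G : sgraph 'I_n) (x : 'I_n -> R) : 1 <= p ->
  \sum_(i < n) `|x i| `^ p = 1 ->
  2 * \sum_(i < n) \sum_(j < n | (i < j)%N && adj G i j) x i * x j <= n%:R ^+ 2.
Proof.
move=> p1 hx; apply: le_trans (val_le G x) _.
apply: (@le_trans _ _ (\sum_(i < n) \sum_(j < n) (1 : R))).
  apply: ler_sum => i _; rewrite [leRHS](bigID (adj G i)) /=.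
  apply: ler_wpDr; first by apply: sumr_ge0.
  apply: ler_sum => j _.
  have := @abs_le1 n p x i p1 hx; have := @abs_le1 n p x j p1 hx.
  have := normr_ge0 (x i); have := normr_ge0 (x j); nra.
by rewrite sumr_const sumr_const !card_ord expr2 mulr_natr.
Qed.

Lemma lam_le_n2 n (p : R) (G : sgraph 'I_n) : 1 <= p -> p_spectral_radius p G <= n%:R ^+ 2.
Proof.
move=> p1; rewrite /p_spectral_radius; apply: sup_le_ub0; first exact: exprn_ge0.
move=> v [x [hx ->]]; exact: (val_bound G p1 hx).
Qed.

End Main.

Section Main2.
Variable R : realType.

Lemma rho_facts (p : R) n : 1 < p -> (0 < n)%N ->
  [/\ 0 < n%:R `^ p^-1, (n%:R `^ p^-1) `^ p = n%:R &
      n%:R `^ (2 - 2 / p) = n%:R ^+ 2 / (n%:R `^ p^-1) ^+ 2].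
Proof.
move=> p1 n0.
have p0 : 0 < p by apply: lt_trans p1.
have nR : 0 < n%:R :> R by rewrite ltr0n.
split.
- by rewrite powR_gt0.
- by rewrite -powRrM mulVf ?gt_eqF // powRr1 // ltW.
- rewrite powRB; last by apply/implyP => _; rewrite (gt_eqF nR).
  rewrite powR_mulrn ?ltW //; congr (_ / _).
  by rewrite mulrC powRrM powR_mulrn // powR_ge0.
Qed.

Lemma lam_free (V : finType) (F : sgraph V) (r : nat) (p : R) : colorable F r.+1 -> 1 < p ->
  forall eps : R, 0 < eps -> eps <= 1 -> exists N : nat, forall n (G : sgraph 'I_n),
  (N <= n)%N -> ~ contains G F ->
  p_spectral_radius p G <= (cc R r + eps) * n%:R `^ (2 - 2 / p).
Proof.
move=> col p1 eps eps0 eps1.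
have [N HN] := Core col p1 eps0 eps1.
exists (maxn N 1) => n G; rewrite geq_max => /andP [hN n1] nc.
have [rho0 rhop na] := rho_facts p1 n1.
set rho := n%:R `^ p^-1 in rho0 rhop na.
rewrite na /p_spectral_radius; apply: sup_le_ub0.
  by apply: mulr_ge0; [rewrite addr_ge0 ?cc_ge0 ?ltW | rewrite divr_ge0 ?exprn_ge0 ?ler0n ?ltW].
move=> v [x [hx ->]]; apply: le_trans (val_le G x) _.
pose z := fun i => rho * `|x i|.
have hz := HN n G hN nc z (fun i => mulr_ge0 (ltW rho0) (normr_ge0 _)).
have zp : \sum_i z i `^ p <= n%:R.
  rewrite (eq_bigr (fun i => n%:R * `|x i| `^ p)); last first.
    by move=> i _; rewrite /z powRM; [rewrite rhop | exact: ltW | exact: normr_ge0].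
  by rewrite -mulr_sumr hx mulr1.
have := hz zp.
have -> : \sum_i \sum_(j | adj G i j) z i * z j =
    rho ^+ 2 * \sum_i \sum_(j | adj G i j) `|x i| * `|x j|.
  rewrite mulr_sumr; apply: eq_bigr => i _; rewrite mulr_sumr; apply: eq_bigr => j _.
  by rewrite /z; ring.
move=> h; rewrite mulrA ler_pdivlMr ?exprn_gt0 //.
lra.
Qed.

Lemma cnt_mod n r (i : 'I_n) : (0 < r)%N ->
  (#|[pred j : 'I_n | (j %% r == i %% r)%N]| <= n %/ r + 1)%N.
Proof.
move=> r0.
have inj : {in [pred j : 'I_n | (j %% r == i %% r)%N] &,
    injective (fun j : 'I_n => (inord (j %/ r)%N : 'I_(n %/ r)%N.+1))}.
  move=> j1 j2; rewrite !inE => /eqP h1 /eqP h2 /(congr1 val) /=.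
  have hj : forall j : 'I_n, ((j %/ r)%N < (n %/ r).+1)%N.
    by move=> j; rewrite ltnS leq_div2r // ltnW.
  rewrite !inordK ?hj // => hq.
  by apply: ord_inj; rewrite (divn_eq j1 r) (divn_eq j2 r) hq h1 h2.
rewrite -(card_in_imset inj); apply: leq_trans (max_card _) _.
by rewrite card_ord addn1.
Qed.

End Main2.

Section Main3.
Variable R : realType.

Lemma turan_low (r : nat) (p : R) n : (0 < r)%N -> 1 < p -> (0 < n)%N ->
  cc R r * n%:R `^ (2 - 2 / p) - n%:R `^ (2 - 2 / p) / n%:R <= p_spectral_radius p (turan r n).
Proof.
move=> r0 p1 n0.
have p0 : 0 < p by apply: lt_trans p1.
have [rho0 rhop na] := rho_facts p1 n0.
set rho := n%:R `^ p^-1 in rho0 rhop na.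
have nR : 0 < n%:R :> R by rewrite ltr0n.
pose c := n%:R `^ (- p^-1).
have c0 : 0 <= c by exact: powR_ge0.
have crho : c = rho^-1 by rewrite /c powRN.
pose x := fun _ : 'I_n => c.
have hx : \sum_(i < n) `|x i| `^ p = 1.
  rewrite (eq_bigr (fun=> n%:R^-1)); last first.
    move=> i _; rewrite /x ger0_norm // /c -powRrM mulNr mulVf ?gt_eqF //.
    by rewrite powR_inv1 // ltW.
  by rewrite sumr_const card_ord -[RHS](mulVf (lt0r_neq0 nR)) mulr_natr.
set E := [set v : R | exists x : 'I_n -> R, \sum_(i < n) `|x i| `^ p = 1 /\
   v = 2 * \sum_(i < n) \sum_(j < n | (i < j)%N && adj (turan r n) i j) x i * x j]%classic.
have hub : has_ubound E.
  exists (n%:R ^+ 2) => v [y [hy ->]]; exact: (val_bound _ (ltW p1) hy).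
have hin : E (2 * \sum_(i < n) \sum_(j < n | (i < j)%N && adj (turan r n) i j) x i * x j).
  by exists x.
rewrite /p_spectral_radius -/E.
apply: le_trans _ (ub_le_sup hub hin).
rewrite -(@sym_sum R n (turan r n) (fun i j => x i * x j)); last by move=> i j; rewrite mulrC.
have hv : \sum_i \sum_(j | adj (turan r n) i j) x i * x j =
    c * c * \sum_i \sum_(j | adj (turan r n) i j) (1 : R).
  rewrite mulr_sumr; apply: eq_bigr => i _; rewrite mulr_sumr; apply: eq_bigr => j _.
  by rewrite mulr1.
rewrite hv.
have hdiv : (n %/ r)%:R <= n%:R / r%:R :> R.
  rewrite ler_pdivlMr ?ltr0n // -natrM ler_nat; exact: leq_trunc_div.
have hi : forall i : 'I_n, n%:R - (n%:R / r%:R + 1) <= \sum_(j | adj (turan r n) i j) (1 : R).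
  move=> i.
  have htot : \sum_(j < n) (1:R) = \sum_(j | adj (turan r n) i j) 1 + \sum_(j | ~~ adj (turan r n) i j) 1.
    by rewrite (bigID (adj (turan r n) i)).
  have hn : \sum_(j < n) (1:R) = n%:R by rewrite sumr_const card_ord.
  have hc : \sum_(j | ~~ adj (turan r n) i j) (1:R) = (#|[pred j : 'I_n | (j %% r == i %% r)%N]|)%:R.
    rewrite sumr_const; congr (_ *+ _); apply: eq_card => j.
    by rewrite !inE unfold_in /= /turan_adj negbK eq_sym.
  have hb : (#|[pred j : 'I_n | (j %% r == i %% r)%N]|)%:R <= n%:R / r%:R + 1 :> R.
    apply: (@le_trans _ _ ((n %/ r) + 1)%N%:R); first by rewrite ler_nat cnt_mod.
    by rewrite natrD lerD2r.
  lra.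
have Plow : n%:R * (n%:R - (n%:R / r%:R + 1)) <= \sum_i \sum_(j | adj (turan r n) i j) (1 : R).
  apply: (@le_trans _ _ (\sum_(i < n) (n%:R - (n%:R / r%:R + 1)))).
    by rewrite sumr_const card_ord mulr_natl.
  by apply: ler_sum => i _; exact: hi.
have rR : r%:R != 0 :> R by rewrite pnatr_eq0 -lt0n.
have ccr : cc R r = 1 - r%:R^-1 by rewrite /cc mulrBl divff // mul1r.
rewrite na crho.
have key : cc R r * (n%:R ^+ 2 / rho ^+ 2) - n%:R ^+ 2 / rho ^+ 2 / n%:R =
    rho^-1 * rho^-1 * (n%:R * (n%:R - (n%:R / r%:R + 1))).
  rewrite ccr; field.
  by rewrite rR (gt_eqF rho0) (gt_eqF nR).
rewrite key; apply: ler_wpM2l => //.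
by rewrite mulr_ge0 // invr_ge0 ltW.
Qed.

End Main3.

Section Final.
Variable R : realType.

Lemma L_ub (V : finType) (F : sgraph V) (p : R) n : 1 <= p ->
  has_ubound [set v : R | exists G : sgraph 'I_n, ~ contains G F /\ v = p_spectral_radius p G]%classic.
Proof. by move=> p1; exists (n%:R ^+ 2) => v [G [_ ->]]; exact: lam_le_n2. Qed.

Lemma T_le_L (V : finType) (F : sgraph V) r (p : R) n : (0 < r)%N -> chromatic_number F = r.+1 ->
  1 <= p -> p_spectral_radius p (turan r n) <= ex_lambda p n F.
Proof.
move=> r0 hchi p1; rewrite /ex_lambda.
have := ub_le_sup (L_ub F n p1); apply.
by exists (turan r n); split => //; exact: turan_free.
Qed.

Lemma L_up (V : finType) (F : sgraph V) (r : nat) (p : R) : colorable F r.+1 -> 1 < p ->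
  forall eps : R, 0 < eps -> eps <= 1 -> exists N : nat, forall n, (N <= n)%N ->
  ex_lambda p n F <= (cc R r + eps) * n%:R `^ (2 - 2 / p).
Proof.
move=> col p1 eps eps0 eps1.
have [N HN] := lam_free col p1 eps0 eps1.
exists N => n hn; rewrite /ex_lambda; apply: sup_le_ub0.
  by rewrite mulr_ge0 ?powR_ge0 // addr_ge0 ?cc_ge0 // ltW.
by move=> v [G [nc ->]]; exact: HN.
Qed.

End Final.

Local Open Scope classical_set_scope.
Local Open Scope ring_scope.
Unset Implicit Arguments.

Theorem theorem3p10 (R : realType) (r : nat) (V : finType) (F : sgraph V) (p : R) :
  (1 <= r)%N -> chromatic_number F = r.+1 -> 1 < p ->
  (fun n : nat => (ex_lambda p n F - p_spectral_radius p (turan r n))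
                    / (n%:R `^ (2 - 2 / p))) @ \oo --> (0 : R)
  /\
  (fun n : nat => ex_lambda p n F / (n%:R `^ (2 - 2 / p))) @ \oo --> (1 - (r%:R : R)^-1).
Proof.
move=> r1 hchi p1.
have col := chi_col hchi.
have p1' : 1 <= p := ltW p1.
have Na0 : forall n, (0 < n)%N -> 0 < n%:R `^ (2 - 2 / p) :> R.
  by move=> n n0; rewrite powR_gt0 // ltr0n.
have lowT : forall n, (0 < n)%N ->
    cc R r - n%:R^-1 <= p_spectral_radius p (turan r n) / n%:R `^ (2 - 2 / p).
  move=> n n0; have h := turan_low r1 p1 n0.
  rewrite ler_pdivlMr ?Na0 //.
  have -> : (cc R r - n%:R^-1) * n%:R `^ (2 - 2 / p) =
      cc R r * n%:R `^ (2 - 2 / p) - n%:R `^ (2 - 2 / p) / n%:R by ring.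
  exact: h.
have TL : forall n, p_spectral_radius p (turan r n) / n%:R `^ (2 - 2 / p)
    <= ex_lambda p n F / n%:R `^ (2 - 2 / p).
  move=> n; apply: ler_wpM2r; first by rewrite invr_ge0 powR_ge0.
  exact: T_le_L.
have upL : forall eps : R, 0 < eps -> eps <= 1 -> exists N : nat, forall n, (N <= n)%N ->
    (0 < n)%N -> ex_lambda p n F / n%:R `^ (2 - 2 / p) <= cc R r + eps.
  move=> eps e0 e1; have [N HN] := L_up col p1 e0 e1; exists N => n hn n0.
  by rewrite ler_pdivrMr ?Na0 // HN.
have invn : forall eps : R, 0 < eps -> exists N : nat, forall n, (N <= n)%N ->
    (0 < n)%N /\ n%:R^-1 <= eps.
  move=> eps e0; exists (Num.Def.archi_bound eps^-1).+1 => n hn; split.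
    exact: leq_trans hn.
  have n0 : 0 < n%:R :> R by rewrite ltr0n; exact: leq_trans hn.
  rewrite -(invrK eps) lef_pV2 ?posrE ?invr_gt0 //.
  apply: ltW; apply: lt_le_trans (archi_boundP _) _; first by rewrite invr_ge0 ltW.
  by rewrite ler_nat ltnW.
have rR : r%:R != 0 :> R by rewrite pnatr_eq0 -lt0n.
have ccr : cc R r = 1 - r%:R^-1 by rewrite /cc mulrBl divff // mul1r.
split.
- apply/cvgrPdist_le => eps e0.
  pose e := Num.min (eps / 2) 1.
  have e0' : 0 < e by rewrite lt_min ltr01 andbT divr_gt0.
  have e1 : e <= 1 by rewrite ge_min lexx orbT.
  have ee : e <= eps / 2 by rewrite ge_min lexx.
  have [N1 H1] := upL e e0' e1.
  have [N2 H2] := invn (eps / 2) (divr_gt0 e0 (ltr0Sn R 1)).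
  exists (maxn N1 N2) => // n /=; rewrite geq_max => /andP [hn1 hn2].
  have [n0 hinv] := H2 n hn2.
  have h1 := H1 n hn1 n0; have h2 := lowT n n0; have h3 := TL n.
  rewrite sub0r normrN mulrBl ler_norml; apply/andP; split; lra.
- apply/cvgrPdist_le => eps e0.
  pose e := Num.min eps 1.
  have e0' : 0 < e by rewrite lt_min ltr01 andbT.
  have e1 : e <= 1 by rewrite ge_min lexx orbT.
  have ee : e <= eps by rewrite ge_min lexx.
  have [N1 H1] := upL e e0' e1.
  have [N2 H2] := invn eps e0.
  exists (maxn N1 N2) => // n /=; rewrite geq_max => /andP [hn1 hn2].
  have [n0 hinv] := H2 n hn2.
  have h1 := H1 n hn1 n0; have h2 := lowT n n0; have h3 := TL n.
  rewrite -ccr ler_norml; apply/andP; split; lra.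
Qed.
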